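(* Let $\mathcal{H}$ be a separable Hilbert space and $H$ a positive Hermitian operator on $\mathcal{H}$ with purely discrete spectrum, such that there is no infinite-dimensional subspace on which $H$ is bounded. For $E>0$ let $\mathcal{P}(E)$ be the set of density operators $\rho$ on $\mathcal{H}$ with $\mathrm{Tr}\,\rho H\le E$. Then $\mathcal{P}(E)$ is complete with respect to the Hilbert–Schmidt norm, i.e. every Cauchy sequence in $\mathcal{P}(E)$ converges in $\|\cdot\|_2$ to an element of $\mathcal{P}(E)$.
   Context: A density operator is a Hermitian, positive semidefinite, trace-class operator of trace 1. $\|A\|_2=\sqrt{\mathrm{Tr}\,A^\dagger A}$ is the Hilbert–Schmidt norm. For positive $\rho$, $\mathrm{Tr}\,\rho H=\sum_n\langle n|\rho|n\rangle E_n$ in an eigenbasis of $H$. *)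

(* Defs.v *)
From HB Require Import structures.
From mathcomp Require Import all_boot all_order all_algebra.
From mathcomp Require Import all_classical all_reals.
From mathcomp Require Import ereal esum.
From mathcomp Require Import complex.
Set Implicit Arguments. Unset Strict Implicit. Unset Printing Implicit Defensive.
Import Order.TTheory GRing.Theory Num.Theory.
Local Open Scope ring_scope.
Local Open Scope classical_set_scope.
Local Open Scope complex_scope.

(* The separable Hilbert space is l^2(I) for a countable index type I,
   identified with H's orthonormal eigenbasis (|n>)_{n in I}; the operator H
   is diag(En).  Operators are represented by their matrices
   A : I -> I -> R[i],  A i j = <i|A|j>. *)

Definition opmat (R : realType) (I : countType) := I -> I -> R[i].

Definition hermitian (R : realType) (I : countType) (A : opmat R I) : Prop :=
  forall i j, A j i = (A i j)^*.

Definition psd (R : realType) (I : countType) (A : opmat R I) : Prop :=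
  forall (s : seq I) (x : I -> R[i]), uniq s ->
    0 <= \sum_(i <- s) \sum_(j <- s) (x i)^* * A i j * x j.

Definition ptrace (R : realType) (I : countType) (A : opmat R I) : \bar R :=
  \esum_(i in [set: I]) (complex.Re (A i i))%:E.

(* density operator: Hermitian, PSD, trace 1 (trace class follows) *)
Definition density (R : realType) (I : countType) (rho : opmat R I) : Prop :=
  hermitian rho /\ psd rho /\ ptrace rho = 1%E.

(* Tr (rho H) = sum_n <n|rho|n> E_n, for positive rho *)
Definition energy (R : realType) (I : countType) (En : I -> R) (rho : opmat R I)
  : \bar R := \esum_(i in [set: I]) (complex.Re (rho i i) * En i)%:E.

Definition PE (R : realType) (I : countType) (En : I -> R) (E : R)
  : set (opmat R I) := [set rho | density rho /\ (energy En rho <= E%:E)%E].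

Definition hs2 (R : realType) (I : countType) (A : opmat R I) : \bar R :=
  \esum_(p in [set: I * I])
    ((complex.Re (A p.1 p.2)) ^+ 2 + (complex.Im (A p.1 p.2)) ^+ 2)%:E.

Definition opsub (R : realType) (I : countType) (A B : opmat R I) : opmat R I :=
  fun i j => A i j - B i j.

(* Main.v *)
Require Import Defs.
From HB Require Import structures.
From mathcomp Require Import all_boot all_order all_algebra.
From mathcomp Require Import all_classical all_reals.
From mathcomp Require Import ereal esum.
From mathcomp Require Import complex.
From mathcomp Require Import topology normedtype sequences.
From mathcomp Require Import ring lra.
Import Order.TTheory GRing.Theory Num.Theory.
Import numFieldNormedType.Exports.
Local Open Scope ring_scope.
Local Open Scope classical_set_scope.

Lemma real_cauchy_cvg (R : realType) (u : nat -> R) :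
  (forall e : R, 0 < e -> exists N, forall m n, (N <= m)%N -> (N <= n)%N -> `|u m - u n| < e) ->
  cvg (u @ \oo).
Proof.
move=> uc.
apply/cauchy_cvgP; apply: cauchy_exP => e e0.
have [N HN] := uc e e0; exists (u N); exists N => // n /= Nn.
by rewrite /ball /= HN.
Qed.

Lemma cvg_sumseq (R : realType) (J : Type) (s : seq J) (f : J -> nat -> R) (l : J -> R) :
  (forall j, f j @ \oo --> l j) ->
  (fun n => \sum_(j <- s) f j n) @ \oo --> \sum_(j <- s) l j.
Proof.
move=> H; elim: s => [|a s IH].
  have -> : (fun n => \sum_(j <- [::]) f j n) = fun=> 0.
    by apply: funext => n; rewrite big_nil.
  rewrite big_nil; exact: cvg_cst.
have -> : (fun n => \sum_(j <- a :: s) f j n) = (fun n => f a n + \sum_(j <- s) f j n).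
  by apply: funext => n; rewrite big_cons.
rewrite big_cons; exact: cvgD.
Qed.

Lemma ReB (R : realType) (a b : R[i]) : complex.Re (a - b) = complex.Re a - complex.Re b.
Proof. by case: a; case: b. Qed.
Lemma ImB (R : realType) (a b : R[i]) : complex.Im (a - b) = complex.Im a - complex.Im b.
Proof. by case: a; case: b. Qed.
Lemma ReD (R : realType) (a b : R[i]) : complex.Re (a + b) = complex.Re a + complex.Re b.
Proof. by case: a; case: b. Qed.
Lemma ImD (R : realType) (a b : R[i]) : complex.Im (a + b) = complex.Im a + complex.Im b.
Proof. by case: a; case: b. Qed.
Lemma ReM (R : realType) (a b : R[i]) : complex.Re (a * b) = complex.Re a * complex.Re b - complex.Im a * complex.Im b.
Proof. by case: a; case: b. Qed.
Lemma ImM (R : realType) (a b : R[i]) : complex.Im (a * b) = complex.Re a * complex.Im b + complex.Im a * complex.Re b.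
Proof. by case: a; case: b. Qed.
Lemma Re_sum (R : realType) (J : Type) (s : seq J) (f : J -> R[i]) :
  complex.Re (\sum_(j <- s) f j) = \sum_(j <- s) complex.Re (f j).
Proof. elim: s => [|a s IH]; rewrite ?big_nil// !big_cons ReD IH. done. Qed.
Lemma Im_sum (R : realType) (J : Type) (s : seq J) (f : J -> R[i]) :
  complex.Im (\sum_(j <- s) f j) = \sum_(j <- s) complex.Im (f j).
Proof. elim: s => [|a s IH]; rewrite ?big_nil// !big_cons ImD IH. done. Qed.
Lemma ge0c (R : realType) (z : R[i]) : (0 <= z) = (complex.Im z == 0) && (0 <= complex.Re z).
Proof. by case: z. Qed.
Lemma cRe_conj (R : realType) (z : R[i]) : complex.Re (conjc z) = complex.Re z.
Proof. by case: z. Qed.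
Lemma cIm_conj (R : realType) (z : R[i]) : complex.Im (conjc z) = - complex.Im z.
Proof. by case: z. Qed.

Lemma esum_le_seq (R : realType) (T : choiceType) (f : T -> R) (c : \bar R) :
  (forall s : seq T, uniq s -> ((\sum_(i <- s) f i)%:E <= c)%E) ->
  (\esum_(i in [set: T]) (f i)%:E <= c)%E.
Proof.
move=> H; apply: ge_ereal_sup => _ [X [finX _] <-].
rewrite fsbig_finite//= sumEFin; apply: H; exact: finmap.fset_uniq.
Qed.

Lemma esum_ge_seq (R : realType) (T : choiceType) (f : T -> R) (s : seq T) :
  uniq s -> ((\sum_(i <- s) f i)%:E <= \esum_(i in [set: T]) (f i)%:E)%E.
Proof.
move=> us; apply: esum_ge; exists [set` s]; first by split; [exact: finite_seq|].
by rewrite -fsbig_seq// sumEFin.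
Qed.

Lemma sum_sub_le (R : realType) (T : eqType) (r1 r2 : seq T) (f : T -> R) :
  uniq r1 -> uniq r2 -> {subset r1 <= r2} -> (forall i, i \in r2 -> 0 <= f i) ->
  \sum_(i <- r1) f i <= \sum_(i <- r2) f i.
Proof.
move=> u1 u2 sub f0.
rewrite [in X in _ <= X](bigID (fun i => i \in r1)) /=.
have -> : \sum_(i <- r2 | i \in r1) f i = \sum_(i <- r1) f i.
  rewrite -big_filter; apply: perm_big; apply: uniq_perm; rewrite ?filter_uniq// => i.
  by rewrite mem_filter; case: (boolP (i \in r1)) => // /sub ->.
rewrite lerDl big_seq_cond; apply: sumr_ge0 => i /andP[/f0 ->] //.
Qed.

Lemma sum_filter_le (R : realType) (T : Type) (r : seq T) (P : pred T) (f : T -> R) :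
  (forall i, 0 <= f i) -> \sum_(i <- r | P i) f i <= \sum_(i <- r) f i.
Proof.
move=> f0; rewrite big_mkcond /=; apply: ler_sum => i _.
by case: (P i).
Qed.

Lemma sq_lt (R : realType) (x y e : R) : 0 < e -> x ^+ 2 + y ^+ 2 < e ^+ 2 -> `|x| < e.
Proof.
move=> e0 h; rewrite ltr_norml; apply/andP; split; nra.
Qed.

Theorem mainTheorem8 (R : realType) (I : countType) (En : I -> R)
  (En_ge0 : forall n, 0 <= En n)
  (Hunb : forall M : R, finite_set [set n | En n <= M])
  (E : R) (E_gt0 : 0 < E)
  (rho : nat -> opmat R I)
  (rhoP : forall k, PE En E (rho k))
  (cauchy : forall eps : R, 0 < eps ->
     exists N : nat, forall m n, (N <= m)%N -> (N <= n)%N ->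
       (hs2 (opsub (rho m) (rho n)) < eps%:E)%E) :
  exists2 sigma : opmat R I, PE En E sigma &
    forall eps : R, 0 < eps ->
      exists N : nat, forall n, (N <= n)%N ->
        (hs2 (opsub (rho n) sigma) < eps%:E)%E.
Proof.
have entry : forall m n i j,
  (((complex.Re (rho m i j) - complex.Re (rho n i j)) ^+ 2 +
    (complex.Im (rho m i j) - complex.Im (rho n i j)) ^+ 2)%:E
    <= hs2 (opsub (rho m) (rho n)))%E.
  move=> m n i j.
  have := @esum_ge_seq R _ (fun p : I * I => (complex.Re (opsub (rho m) (rho n) p.1 p.2)) ^+ 2
     + (complex.Im (opsub (rho m) (rho n) p.1 p.2)) ^+ 2) [:: (i, j)] isT.
  by rewrite big_seq1 /opsub /= ReB ImB.
have cre : forall i j, cvg ((fun n => complex.Re (rho n i j)) @ \oo).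
  move=> i j; apply: real_cauchy_cvg => e e0.
  have [N HN] := cauchy (e ^+ 2) (exprn_gt0 2 e0).
  exists N => m n Nm Nn.
  have := le_lt_trans (entry m n i j) (HN m n Nm Nn); rewrite lte_fin.
  exact: sq_lt.
have cim : forall i j, cvg ((fun n => complex.Im (rho n i j)) @ \oo).
  move=> i j; apply: real_cauchy_cvg => e e0.
  have [N HN] := cauchy (e ^+ 2) (exprn_gt0 2 e0).
  exists N => m n Nm Nn.
  have := le_lt_trans (entry m n i j) (HN m n Nm Nn); rewrite lte_fin addrC.
  exact: sq_lt.
pose sig : opmat R I := fun i j => Complex (lim ((fun n => complex.Re (rho n i j)) @ \oo))
   (lim ((fun n => complex.Im (rho n i j)) @ \oo)).
have hRe : forall i j, (fun n => complex.Re (rho n i j)) @ \oo --> complex.Re (sig i j).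
  exact: cre.
have hIm : forall i j, (fun n => complex.Im (rho n i j)) @ \oo --> complex.Im (sig i j).
  exact: cim.
clearbody sig.
have herm : Defs.hermitian sig.
  move=> i j.
  have e1 : complex.Re (sig j i) = complex.Re (sig i j).
    have f1 : (fun n => complex.Re (rho n j i)) = (fun n => complex.Re (rho n i j)).
      apply: funext => n; have [[h _] _] := rhoP n; by rewrite h cRe_conj.
    have := hRe j i; rewrite f1 => h1; exact: (cvg_unique _ h1 (hRe i j)).
  have e2 : complex.Im (sig j i) = - complex.Im (sig i j).
    have f1 : (fun n => complex.Im (rho n j i)) = (fun n => - complex.Im (rho n i j)).
      apply: funext => n; have [[h _] _] := rhoP n; by rewrite h cIm_conj.
    have := hIm j i; rewrite f1 => h1; exact: (cvg_unique _ h1 (cvgN (hIm i j))).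
  move: e1 e2; case: (sig j i) => a b; case: (sig i j) => c d /= -> ->; done.
have near0 : forall P : nat -> Prop, (forall n, P n) -> \forall n \near \oo, P n.
  by move=> P HP; apply: nearW.
have psdsig : Defs.psd sig.
  move=> s x us.
  pose w i j := conjc (x i) * x j.
  have QRe : forall A : opmat R I, complex.Re (\sum_(i <- s) \sum_(j <- s) conjc (x i) * A i j * x j)
     = \sum_(i <- s) \sum_(j <- s) (complex.Re (A i j) * complex.Re (w i j) - complex.Im (A i j) * complex.Im (w i j)).
    move=> A; rewrite Re_sum; apply: eq_bigr => i _; rewrite Re_sum; apply: eq_bigr => j _.
    by rewrite mulrAC mulrC ReM.
  have QIm : forall A : opmat R I, complex.Im (\sum_(i <- s) \sum_(j <- s) conjc (x i) * A i j * x j)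
     = \sum_(i <- s) \sum_(j <- s) (complex.Re (A i j) * complex.Im (w i j) + complex.Im (A i j) * complex.Re (w i j)).
    move=> A; rewrite Im_sum; apply: eq_bigr => i _; rewrite Im_sum; apply: eq_bigr => j _.
    by rewrite mulrAC mulrC ImM.
  have cRe : (fun n => complex.Re (\sum_(i <- s) \sum_(j <- s) conjc (x i) * rho n i j * x j)) @ \oo -->
      complex.Re (\sum_(i <- s) \sum_(j <- s) conjc (x i) * sig i j * x j).
    have -> : (fun n => complex.Re (\sum_(i <- s) \sum_(j <- s) conjc (x i) * rho n i j * x j)) =
      (fun n => \sum_(i <- s) \sum_(j <- s) (complex.Re (rho n i j) * complex.Re (w i j) - complex.Im (rho n i j) * complex.Im (w i j))).
      by apply: funext => n; rewrite QRe.
    rewrite QRe; apply: cvg_sumseq => i; apply: cvg_sumseq => j.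
    by apply: cvgB; apply: cvgMr_tmp.
  have cIm : (fun n => complex.Im (\sum_(i <- s) \sum_(j <- s) conjc (x i) * rho n i j * x j)) @ \oo -->
      complex.Im (\sum_(i <- s) \sum_(j <- s) conjc (x i) * sig i j * x j).
    have -> : (fun n => complex.Im (\sum_(i <- s) \sum_(j <- s) conjc (x i) * rho n i j * x j)) =
      (fun n => \sum_(i <- s) \sum_(j <- s) (complex.Re (rho n i j) * complex.Im (w i j) + complex.Im (rho n i j) * complex.Re (w i j))).
      by apply: funext => n; rewrite QIm.
    rewrite QIm; apply: cvg_sumseq => i; apply: cvg_sumseq => j.
    by apply: cvgD; apply: cvgMr_tmp.
  rewrite ge0c; apply/andP; split.
    rewrite eq_le; apply/andP; split.
      apply: (cvgr_to_le cIm); apply: near0 => n.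
      have [[_ [h _]] _] := rhoP n; have := h s x us; rewrite ge0c => /andP[/eqP -> _] //.
    apply: (cvgr_to_ge cIm); apply: near0 => n.
    have [[_ [h _]] _] := rhoP n; have := h s x us; rewrite ge0c => /andP[/eqP -> _] //.
  apply: (cvgr_to_ge cRe); apply: near0 => n.
  have [[_ [h _]] _] := rhoP n; have := h s x us; rewrite ge0c => /andP[_ ->] //.
have re0 : forall n i, 0 <= complex.Re (rho n i i).
  move=> n i; have [[_ [h _]] _] := rhoP n.
  have := h [:: i] (fun _ => Complex 1 0) isT.
  rewrite !big_seq1 ge0c => /andP[_].
  rewrite mulr1 ReM cRe_conj cIm_conj /=.
  by rewrite mul1r oppr0 mul0r subr0.
have diag_le : forall (f : I -> R) (c : R),
    (forall n, (\esum_(i in [set: I]) (complex.Re (rho n i i) * f i)%:E <= c%:E)%E) ->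
    (\esum_(i in [set: I]) (complex.Re (sig i i) * f i)%:E <= c%:E)%E.
  move=> f c Hc; apply: esum_le_seq => s us; rewrite lee_fin.
  have cs : (fun n => \sum_(i <- s) complex.Re (rho n i i) * f i) @ \oo -->
      \sum_(i <- s) complex.Re (sig i i) * f i.
    by apply: cvg_sumseq => i; apply: cvgMr_tmp.
  apply: (cvgr_to_le cs); apply: near0 => n; rewrite -lee_fin.
  exact: le_trans (@esum_ge_seq R _ (fun i => complex.Re (rho n i i) * f i) s us) (Hc n).
have en_sig : (energy En sig <= E%:E)%E.
  by apply: diag_le => n; have [_ h] := rhoP n.
have tr_le : (ptrace sig <= 1%:E)%E.
  rewrite /ptrace.
  have -> : (\esum_(i in [set: I]) (complex.Re (sig i i))%:E) =
    (\esum_(i in [set: I]) (complex.Re (sig i i) * 1)%:E).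
    by apply: eq_esum => i _; rewrite mulr1.
  apply: diag_le => n; have [[_ [_ h]] _] := rhoP n.
  by move: h; rewrite /ptrace => h; under eq_esum do rewrite mulr1; rewrite h.
have tail : forall (M : R) (sF : seq I), 0 < M -> uniq sF -> (forall i, En i <= M -> i \in sF) ->
   forall n, 1 <= \sum_(i <- sF) complex.Re (rho n i i) + E / M.
  move=> M sF M0 usF HF n.
  have [[_ [_ tr1]] en] := rhoP n.
  have : (ptrace (rho n) <= (\sum_(i <- sF) complex.Re (rho n i i) + E / M)%:E)%E.
    apply: esum_le_seq => s us; rewrite lee_fin.
    rewrite (bigID (fun i => En i <= M)) /=; apply: lerD.
      rewrite -big_filter; apply: sum_sub_le.
      - exact: filter_uniq.
      - exact: usF.
      - by move=> i; rewrite mem_filter => /andP[/HF].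
      - by move=> i _; exact: re0.
    apply: (@le_trans _ _ (\sum_(i <- s | ~~ (En i <= M)) complex.Re (rho n i i) * En i / M)).
      apply: ler_sum => i; rewrite -ltNge => hi.
      rewrite ler_pdivlMr //; apply: ler_wpM2l; [exact: re0 | exact: ltW].
    rewrite -mulr_suml; apply: ler_wpM2r; first by rewrite invr_ge0 ltW.
    have h1 := @sum_filter_le R I s (fun i => ~~ (En i <= M)) (fun i => complex.Re (rho n i i) * En i) (fun i => mulr_ge0 (re0 n i) (En_ge0 i)).
    apply: le_trans h1 _.
    rewrite -lee_fin; exact: le_trans (@esum_ge_seq R _ (fun i => complex.Re (rho n i i) * En i) s us) en.
  by rewrite tr1 lee_fin.
have tr_ge : forall M, 0 < M -> ((1 - E / M)%:E <= ptrace sig)%E.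
  move=> M M0.
  have [s0 hs0] := (finite_seqP _).1 (Hunb M).
  pose sF := undup s0.
  have HF : forall i, En i <= M -> i \in sF.
    move=> i hi; rewrite mem_undup.
    have : [set` s0] i by rewrite -hs0.
    by [].
  have cs : (fun n => \sum_(i <- sF) complex.Re (rho n i i)) @ \oo --> \sum_(i <- sF) complex.Re (sig i i).
    by apply: cvg_sumseq => i.
  apply: le_trans (@esum_ge_seq R _ (fun i => complex.Re (sig i i)) sF (undup_uniq _)).
  rewrite lee_fin lerBlDr; apply: (cvgr_to_ge (cvgD cs (cvg_cst (E / M)))).
  apply: near0 => n /=; apply: tail => //; exact: undup_uniq.
have tr1 : ptrace sig = 1%E.
  move: tr_le tr_ge; case: (ptrace sig) => [t| |] hle hge.
  - congr (_%:E); apply/eqP; rewrite eq_le -lee_fin hle /=.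
    rewrite leNgt; apply/negP => t1.
    have hM : 0 < 2 * E / (1 - t) by apply: divr_gt0; [apply: mulr_gt0 | rewrite subr_gt0].
    have := hge _ hM; rewrite lee_fin.
    have -> : E / (2 * E / (1 - t)) = (1 - t) / 2.
      by field; rewrite subr_eq0 gt_eqF // lt0r_neq0.
    lra.
  - by move: hle.
  - by have := hge 1 ltr01.
exists sig; first by split => //; split => //; split.
move=> eps e0.
have [N HN] : exists N : nat, forall m n, (N <= m)%N -> (N <= n)%N -> (hs2 (opsub (rho m) (rho n)) < (eps / 2)%:E)%E by apply: cauchy; lra.
exists N => n Nn.
apply: (@le_lt_trans _ _ (eps / 2)%:E); last by rewrite lte_fin; lra.
apply: esum_le_seq => s us; rewrite lee_fin.
have -> : \sum_(p <- s) ((complex.Re (opsub (rho n) sig p.1 p.2)) ^+ 2 + (complex.Im (opsub (rho n) sig p.1 p.2)) ^+ 2)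
  = \sum_(p <- s) ((complex.Re (rho n p.1 p.2) - complex.Re (sig p.1 p.2)) * (complex.Re (rho n p.1 p.2) - complex.Re (sig p.1 p.2))
        + (complex.Im (rho n p.1 p.2) - complex.Im (sig p.1 p.2)) * (complex.Im (rho n p.1 p.2) - complex.Im (sig p.1 p.2))).
  by apply: eq_bigr => p _; rewrite /opsub ReB ImB !expr2.
have cs : (fun m => \sum_(p <- s) ((complex.Re (rho n p.1 p.2) - complex.Re (rho m p.1 p.2)) * (complex.Re (rho n p.1 p.2) - complex.Re (rho m p.1 p.2))
        + (complex.Im (rho n p.1 p.2) - complex.Im (rho m p.1 p.2)) * (complex.Im (rho n p.1 p.2) - complex.Im (rho m p.1 p.2)))) @ \oo -->
     \sum_(p <- s) ((complex.Re (rho n p.1 p.2) - complex.Re (sig p.1 p.2)) * (complex.Re (rho n p.1 p.2) - complex.Re (sig p.1 p.2))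
        + (complex.Im (rho n p.1 p.2) - complex.Im (sig p.1 p.2)) * (complex.Im (rho n p.1 p.2) - complex.Im (sig p.1 p.2))).
  apply: cvg_sumseq => p.
  apply: cvgD; apply: cvgM; apply: cvgB; (exact: cvg_cst || exact: hRe || exact: hIm).
apply: (cvgr_to_le cs).
exists N => // m /= Nm.
rewrite -lee_fin; apply: le_trans (ltW (HN n m Nn Nm)).
have := @esum_ge_seq R _ (fun p : I * I => (complex.Re (opsub (rho n) (rho m) p.1 p.2)) ^+ 2
     + (complex.Im (opsub (rho n) (rho m) p.1 p.2)) ^+ 2) s us.
apply: le_trans; rewrite lee_fin le_eqVlt; apply/orP; left; apply/eqP.
by apply: eq_bigr => p _; rewrite /opsub ReB ImB !expr2.
Qed.
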